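(* Let $X=(X^{(1)},\dots,X^{(p)})\in\mathbb{R}^p$ be a random vector with finite second moments, mean $\mu_X$ and covariance matrix $\Sigma_X$, and let $\epsilon\in\mathbb{R}$ be a random variable with $E(\epsilon)=0$, $\mathrm{var}(\epsilon)=\sigma^2>0$, uncorrelated with $X^{(1)},\dots,X^{(p)}$. Let $Y=\delta+\sum_{j=1}^p\beta_jX^{(j)}+\epsilon$ for some $\delta\in\mathbb{R}$ and $\beta\in\mathbb{R}^p$, and let $\mathcal{A}=\{j:\beta_j\neq 0\}$ with $\mathrm{peff}=|\mathcal{A}|$. Assume (C1) $\Sigma_X$ is strictly positive definite, and (C2) the non-zero coefficients $\{\beta_j; j\in\mathcal{A}\}$ are a realization of a random vector whose distribution on $\mathbb{R}^{\mathrm{peff}}$ has a density $f$ with respect to Lebesgue measure (after realization they are held fixed in the model). Then the distribution of $(X,Y)$ is partially faithful almost surely with respect to the distribution generating the non-zero regression coefficients.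
   Context: For random variables $Z^{(1)},Z^{(2)}$ and a collection $W$ of random variables, $\rho(Z^{(1)},Z^{(2)}\mid W)$ denotes the population partial correlation. For $\mathcal{S}\subseteq\{1,\dots,p\}$, $X^{(\mathcal{S})}=\{X^{(j)};j\in\mathcal{S}\}$ and $\{j\}^C=\{1,\dots,p\}\setminus\{j\}$. The distribution of $(X,Y)$ is called partially faithful if for every $j\in\{1,\dots,p\}$: if $\rho(Y,X^{(j)}\mid X^{(\mathcal{S})})=0$ for some $\mathcal{S}\subseteq\{j\}^C$, then $\rho(Y,X^{(j)}\mid X^{(\{j\}^C)})=0$. *)

(* Defs.v *)
From HB Require Import structures.
From mathcomp Require Import all_boot all_order all_algebra.
From mathcomp Require Import all_classical all_reals all_analysis.
Set Implicit Arguments. Unset Strict Implicit. Unset Printing Implicit Defensive.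
Import Order.TTheory GRing.Theory Num.Theory.
Local Open Scope ring_scope.

Definition cov {d} {T : measurableType d} {R : realType}
  (P : probability T R) (Z1 Z2 : T -> R) : R := fine (covariance P Z1 Z2).

Definition covmx {d} {T : measurableType d} {R : realType}
  (P : probability T R) k (W : 'I_k -> T -> R) : 'M[R]_k :=
  \matrix_(i, j) cov P (W i) (W j).

(* Population partial covariance of Z1, Z2 given the family W:
   cov(Z1,Z2) - cov(Z1,W) Sigma_WW^{-1} cov(W,Z2)
   (= covariance of the residuals of the best linear predictions from W). *)
Definition pcov {d} {T : measurableType d} {R : realType}
  (P : probability T R) (Z1 Z2 : T -> R) k (W : 'I_k -> T -> R) : R :=
  cov P Z1 Z2 -
  ((\row_i cov P Z1 (W i)) *m invmx (covmx P W) *m (\col_i cov P (W i) Z2)) 0 0.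

Definition pcorr {d} {T : measurableType d} {R : realType}
  (P : probability T R) (Z1 Z2 : T -> R) k (W : 'I_k -> T -> R) : R :=
  pcov P Z1 Z2 W / Num.sqrt (pcov P Z1 Z1 W * pcov P Z2 Z2 W).

(* X^(S) = {X^(j); j in S}, enumerated in increasing order. *)
Definition Xsub {T : Type} {R : Type} p (X : 'I_p -> T -> R) (S : {set 'I_p})
  : 'I_#|S| -> T -> R := fun i => X (enum_val i).
Arguments Xsub {T R p} X S _ _.

Definition partially_faithful {d} {T : measurableType d} {R : realType}
  (P : probability T R) p (X : 'I_p -> T -> R) (Y : T -> R) : Prop :=
  forall j : 'I_p,
    (exists S : {set 'I_p}, S \subset [set~ j] /\ pcorr P Y (X j) (Xsub X S) = 0) ->
    pcorr P Y (X j) (Xsub X [set~ j]) = 0.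

Definition posdef {R : realType} k (M : 'M[R]_k) : Prop :=
  M^T = M /\ forall v : 'cV[R]_k, v != 0 -> 0 < (v^T *m M *m v) 0 0.

(* Lebesgue integral over R^n (coordinates as n-tuples), written as an
   iterated integral (equal, by Tonelli, to the integral w.r.t. the
   n-dimensional Lebesgue measure for nonnegative measurable integrands). *)
Fixpoint lebesgue_iint {R : realType} (n : nat) : (n.-tuple R -> \bar R) -> \bar R :=
  match n with
  | 0 => fun g => g [tuple]
  | m.+1 => fun g => (\int[@lebesgue_measure R]_x
                        lebesgue_iint (fun t : m.-tuple R => g (cons_tuple x t)))%E
  end.

(* Regression coefficient vector beta in R^p with beta_j = 0 off A and
   (beta_j)_{j in A} given (in increasing order of j) by b. *)
Definition beta_of {R : realType} p (A : {set 'I_p}) (b : #|A|.-tuple R) : 'I_p -> R :=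
  fun j => match [pick i : 'I_#|A| | enum_val i == j] with
           | Some i => tnth b i
           | None => 0
           end.
Arguments beta_of {R p A} b j.

(* Main.v *)
Require Import Defs.
From HB Require Import structures.
From mathcomp Require Import all_boot all_order all_algebra.
From mathcomp Require Import all_classical all_reals all_analysis.
From mathcomp Require Import ring.
Import Order.TTheory GRing.Theory Num.Theory.
Local Open Scope ring_scope.
Local Open Scope classical_set_scope.


Lemma iint0 (R : realType) n (g : n.-tuple R -> \bar R) :
  (forall b, g b = 0%E) -> lebesgue_iint g = 0%E.
Proof.
elim: n g => [|n IH] g hg /=; first exact: hg.
by apply: integral0_eq => x _; apply: IH => t; apply: hg.
Qed.

Lemma iint_ge0 (R : realType) n (g : n.-tuple R -> \bar R) :
  (forall b, (0 <= g b)%E) -> (0 <= lebesgue_iint g)%E.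
Proof.
elim: n g => [|n IH] g hg /=; first exact: hg.
by apply: integral_ge0 => x _; apply: IH => t; apply: hg.
Qed.

Lemma integral_pt0 (R : realType) (h : R -> \bar R) (x0 : R) :
  (forall x, x != x0 -> h x = 0%E) ->
  (\int[@lebesgue_measure R]_x h x = 0)%E.
Proof.
move=> h0.
rewrite -(@integral_setD1 _ h x0 setT).
- by apply: integral0_eq => x [_ /= /eqP hx]; apply: h0.
- by apply: measurableD => //; exact: measurable_set1.
- eapply (@eq_measurable_fun _ _ _ (measurable_realfun.constructive_ereal_extended__canonical__measurable_structure_SigmaRing R) _ (fun=> 0%E) h). 2: exact: measurable_cst.
  by move=> x; rewrite inE => -[_ /= /eqP hx]; rewrite h0.
Qed.

Lemma iint_hyper (R : realType) n (c : 'I_n -> R) (e : R)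
  (g : n.-tuple R -> \bar R) :
  (exists i, c i != 0) -> (forall b, (0 <= g b)%E) ->
  lebesgue_iint (fun b => if \sum_i c i * tnth b i + e == 0 then g b else 0%E) = 0%E.
Proof.
elim: n c e g => [|n IH] c e g [i ci] hg; first by case: i ci.
rewrite /=.
have [[i' ci']|] := pselect (exists i', c (lift ord0 i') != 0).
  apply: integral0_eq => x _.
  have := IH (fun i => c (lift ord0 i)) (c ord0 * x + e)
     (fun t => g (cons_tuple x t)) (ex_intro _ i' ci') (fun t => hg _).
  apply: eq_trans; apply: f_equal; apply/funext => t.
  have hS : forall i0, tnth (cons_tuple x t) (lift ord0 i0) = tnth t i0.
    by move=> i0; exact: tnthS.
  rewrite big_ord_recl tnth0.
  under eq_bigr do rewrite hS.
  by rewrite (addrC (c ord0 * x)) -addrA.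
move=> hnone.
have c'0 : forall i', c (lift ord0 i') = 0.
  by move=> i'; apply/eqP; apply: contra_notT hnone => h; exists i'.
have c0 : c ord0 != 0.
  by case: (unliftP ord0 i) ci => [i' ->|->] //; rewrite c'0 eqxx.
apply: (@integral_pt0 _ _ (- e / c ord0)) => x hx.
apply: iint0 => t.
rewrite big_ord_recl tnth0 big1 ?addr0; last by move=> i' _; rewrite c'0 mul0r.
case: eqP => // h; exfalso; move/eqP: hx; apply.
have -> : e = - (c ord0 * x) by apply/eqP; rewrite -addr_eq0 addrC h.
by rewrite opprK mulrC mulKf.
Qed.

Lemma hyper_negl (R : realType) (d' : measure_display) (Omega : measurableType d')
  (Q : probability Omega R) m (B : Omega -> m.-tuple R) (hB : measurable_fun setT B)
  (f : m.-tuple R -> R) (hf0 : forall b, 0 <= f b)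
  (hdens : forall E : set (m.-tuple R), measurable E ->
      Q (B @^-1` E) = lebesgue_iint (fun b => (\1_E b * f b)%:E))
  (c : 'I_m -> R) (i : 'I_m) (ci : c i != 0) :
  Q.-negligible [set w | \sum_i c i * tnth (B w) i = 0].
Proof.
pose H := [set b : m.-tuple R | \sum_i c i * tnth b i = 0].
have mH : measurable H.
  have mfun : measurable_fun setT (fun b : m.-tuple R => \sum_i c i * tnth b i).
    apply: measurable_sum => k; apply: measurable_realfun.measurable_funM => //.
    exact: measurable_tnth.
  have := mfun measurableT [set (0:R)] (measurable_set1 (0 : R)).
  by rewrite setTI.
exists (B @^-1` H); split => //.
  by have := hB measurableT H mH; rewrite setTI.
rewrite hdens //.
have -> : (fun b => (\1_H b * f b)%:E) =
   (fun b => if \sum_i c i * tnth b i + 0 == 0 then (f b)%:E else 0%E).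
  apply/funext => b; rewrite addr0 indicE; case: eqP => h.
    by rewrite mem_set // mul1r.
  by rewrite memNset // mul0r.
apply: iint_hyper; first by exists i.
by move=> b; rewrite lee_fin.
Qed.


Section CovR.
Context d (T : measurableType d) (R : realType) (P : probability T R).
Local Notation L2 := (Lfun P 2%:E).

Lemma L2_add (X Y : T -> R) : X \in L2 -> Y \in L2 -> (fun t => X t + Y t) \in L2.
Proof.
move=> hX hY; have h12 : (1 <= 2%:E :> \bar R)%E by rewrite lee_fin ler1n.
by have := rpredD hX hY; apply.
Qed.

Lemma L2_scale a (X : T -> R) : X \in L2 -> (fun t => a * X t) \in L2.
Proof.
move=> hX; have h12 : (1:R) <= 2 by rewrite ler1n.
have -> : (fun t => a * X t) = a \o* X by apply/funext => t /=; rewrite mulrC.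
exact: (Lfun_scale (f:=X) a (r:=2) h12 hX).
Qed.

Lemma L2_cst c : (fun _ : T => c) \in L2.
Proof. exact: Lfun_cst. Qed.

Lemma cov_fin (X Y : T -> R) : X \in L2 -> Y \in L2 ->
  covariance P X Y \is a fin_num.
Proof.
move=> hX hY.
have Pfin : P setT \is a fin_num := fin_num_measure P _ measurableT.
apply: covariance_fin_num; try exact: Lfun_subset12.
exact: Lfun2_mul_Lfun1.
Qed.

Lemma covE (X Y : T -> R) : X \in L2 -> Y \in L2 ->
  (cov P X Y)%:E = covariance P X Y.
Proof. by move=> hX hY; rewrite /cov fineK // cov_fin. Qed.

Lemma covC (X Y : T -> R) : cov P X Y = cov P Y X.
Proof. by rewrite /cov covarianceC. Qed.

Lemma covDl (X Y Z : T -> R) : X \in L2 -> Y \in L2 -> Z \in L2 ->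
  cov P (fun t => X t + Y t) Z = cov P X Z + cov P Y Z.
Proof.
move=> hX hY hZ; apply: EFin_inj.
rewrite EFinD !covE //; last exact: L2_add.
exact: covarianceDl.
Qed.

Lemma covZl a (X Y : T -> R) : X \in L2 -> Y \in L2 ->
  cov P (fun t => a * X t) Y = a * cov P X Y.
Proof.
move=> hX hY; apply: EFin_inj.
have Pfin : P setT \is a fin_num := fin_num_measure P _ measurableT.
rewrite EFinM !covE //; last exact: L2_scale.
have -> : (fun t => a * X t) = a \o* X by apply/funext => t /=; rewrite mulrC.
apply: covarianceZl; try exact: Lfun_subset12.
exact: Lfun2_mul_Lfun1.
Qed.

Lemma cov_cstl c (X : T -> R) : cov P (fun=> c) X = 0.
Proof. by rewrite /cov covariance_cst_l. Qed.

Lemma cov_suml m (G : 'I_m -> T -> R) (Z : T -> R) :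
  (forall j, G j \in L2) -> Z \in L2 ->
  (fun t => \sum_(j < m) G j t) \in L2 /\
  cov P (fun t => \sum_(j < m) G j t) Z = \sum_(j < m) cov P (G j) Z.
Proof.
move=> hG hZ; elim: m G hG => [|m IH] G hG.
  have -> : (fun t => \sum_(j < 0) G j t) = (fun=> 0).
    by apply/funext => t; rewrite big_ord0.
  by rewrite big_ord0 cov_cstl; split => //; exact: L2_cst.
have -> : (fun t => \sum_(j < m.+1) G j t) =
    (fun t => (fun t => \sum_(j < m) G (widen_ord (leqnSn m) j) t) t + G ord_max t).
  by apply/funext => t; rewrite big_ord_recr.
have [h1 h2] := IH (fun j => G (widen_ord (leqnSn m) j)) (fun j => hG _).
split; first exact: L2_add.
by rewrite covDl // h2 big_ord_recr.
Qed.

End CovR.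
Arguments L2_add {d T R P} X Y.
Arguments L2_scale {d T R P} a X.
Arguments L2_cst {d T R P} c.
Arguments cov_fin {d T R P} X Y.
Arguments covE {d T R P} X Y.
Arguments covC {d T R P} X Y.
Arguments covDl {d T R P} X Y Z.
Arguments covZl {d T R P} a X Y.
Arguments cov_cstl {d T R P} c X.
Arguments cov_suml {d T R P m} G Z.


Section Lin.
Context (R : realType) (p : nat).

Definition Emx (S : {set 'I_p}) : 'M[R]_(p, #|S|) :=
  \matrix_(k, i) (k == enum_val i)%:R.
Definition Gmx (Sg : 'M[R]_p) S := (Emx S)^T *m Sg *m Emx S.
Definition Mmx (Sg : 'M[R]_p) S :=
  Sg - Sg *m Emx S *m invmx (Gmx Sg S) *m (Emx S)^T *m Sg.

Lemma sum_delta_r (F : 'I_p -> R) (a : 'I_p) :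
  \sum_k F k * (k == a)%:R = F a.
Proof.
rewrite (bigD1 a) //= eqxx mulr1 big1 ?addr0 // => k /negPf ->.
by rewrite mulr0.
Qed.

Lemma rowmxE m S (r : 'M[R]_(m, p)) :
  r *m Emx S = \matrix_(i, j) r i (enum_val j).
Proof.
apply/matrixP => i j; rewrite !mxE.
by under eq_bigr do rewrite mxE; rewrite sum_delta_r.
Qed.

Lemma colmxE m S (c : 'M[R]_(p, m)) :
  (Emx S)^T *m c = \matrix_(i, j) c (enum_val i) j.
Proof.
apply/matrixP => i j; rewrite !mxE.
by under eq_bigr do rewrite !mxE mulrC; rewrite sum_delta_r.
Qed.

Lemma GmxE Sg S : Gmx Sg S = \matrix_(i, j) Sg (enum_val i) (enum_val j).
Proof.
apply/matrixP => i j; rewrite /Gmx rowmxE colmxE !mxE.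
by [].
Qed.

Lemma EmxwE m (S : {set 'I_p}) (w : 'M[R]_(#|S|, m)) i j : (Emx S *m w) (enum_val i) j = w i j.
Proof.
rewrite mxE (bigD1 i) //= mxE eqxx mul1r big1 ?addr0 // => k hk.
by rewrite mxE (inj_eq enum_val_inj) eq_sym (negPf hk) mul0r.
Qed.

Lemma nz_entry m n (v : 'M[R]_(m, n)) : v != 0 -> exists i j, v i j != 0.
Proof.
move=> nz; case: (pselect (exists i j, v i j != 0)) => // hn; exfalso.
move/eqP: nz; apply; apply/matrixP => a b; rewrite mxE; apply/eqP.
by apply: contra_notT hn => h; exists a, b.
Qed.

Lemma posdef_ge0 (Sg : 'M[R]_p) : posdef Sg -> forall v : 'cV_p, 0 <= (v^T *m Sg *m v) 0 0.
Proof.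
move=> [_ hp] v; have [->|nz] := eqVneq v 0; last exact/ltW/hp.
by rewrite mulmx0 mxE.
Qed.

Lemma Gmx_unit (Sg : 'M[R]_p) S : posdef Sg -> Gmx Sg S \in unitmx.
Proof.
move=> hS; rewrite unitmxE unitfE; apply/det0P => -[v nz hv].
pose u := Emx S *m v^T.
have nzu : u != 0.
  have [a [b hab]] := nz_entry _ _ _ nz.
  have hab' : v^T b 0 != 0 by rewrite mxE -(ord1 a).
  apply/eqP => hu; move: hab'.
  by rewrite -(EmxwE _ S) -/u hu mxE eqxx.
have := hS.2 u nzu.
have -> : u^T *m Sg *m u = v *m Gmx Sg S *m v^T.
  by rewrite /u /Gmx trmx_mul trmxK !mulmxA.
by rewrite hv mul0mx mxE ltxx.
Qed.

Lemma quadE (Sg : 'M[R]_p) S (u : 'cV_p) : Gmx Sg S \in unitmx ->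
  let w := invmx (Gmx Sg S) *m ((Emx S)^T *m Sg *m u) in
  let z := u - Emx S *m w in
  z^T *m Sg *m z = u^T *m Mmx Sg S *m u.
Proof.
move=> hu w z.
have Gw : Gmx Sg S *m w = (Emx S)^T *m Sg *m u by rewrite /w mulmxA mulmxV // mul1mx.
have key : w^T *m (Emx S)^T *m Sg *m (Emx S *m w) = w^T *m (Emx S)^T *m Sg *m u.
  transitivity (w^T *m (Gmx Sg S *m w)); first by rewrite /Gmx !mulmxA.
  by rewrite Gw !mulmxA.
rewrite /z [(u - _)^T]linearB /= trmx_mul !mulmxBl !mulmxBr key subrr subr0.
by rewrite ?mulmxBl /w !mulmxA.
Qed.

Lemma quad_delta m (A : 'M[R]_m) (a b : 'I_m) :
  ((delta_mx a 0 : 'cV[R]_m)^T *m A *m (delta_mx b 0 : 'cV[R]_m)) 0 0 = A a b.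
Proof. by rewrite trmx_delta -rowE -colE !mxE. Qed.

Lemma Mmx_ge0 (Sg : 'M[R]_p) S (u : 'cV_p) : posdef Sg ->
  0 <= (u^T *m Mmx Sg S *m u) 0 0.
Proof.
move=> hS; rewrite -(quadE Sg S u (Gmx_unit Sg S hS)); exact: posdef_ge0.
Qed.

Lemma Mmx_diag (Sg : 'M[R]_p) (S : {set 'I_p}) j : posdef Sg -> j \notin S -> 0 < Mmx Sg S j j.
Proof.
move=> hS jS; rewrite -quad_delta -(quadE Sg S _ (Gmx_unit Sg S hS)).
apply: hS.2; apply/eqP => /matrixP /(_ j 0).
rewrite !mxE eqxx /= big1 ?subr0.
  by move/eqP; rewrite oner_eq0.
move=> i _; rewrite !mxE; case: eqP => [hj|]; last by rewrite mul0r.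
by move: jS; rewrite hj enum_valP.
Qed.

Lemma Mmx_S0 (Sg : 'M[R]_p) (S : {set 'I_p}) k j : posdef Sg -> k \in S -> Mmx Sg S k j = 0.
Proof.
move=> hS kS; have hu := Gmx_unit Sg S hS.
set i0 := enum_rank_in kS k.
have hk : enum_val i0 = k by rewrite enum_rankK_in.
rewrite /Mmx mxE.
have -> : Sg *m Emx S *m invmx (Gmx Sg S) *m (Emx S)^T *m Sg =
   (Sg *m Emx S) *m (invmx (Gmx Sg S) *m ((Emx S)^T *m Sg)) by rewrite !mulmxA.
have hrow : row k (Sg *m Emx S) = row i0 (Gmx Sg S).
  by apply/rowP => i; rewrite GmxE rowmxE !mxE hk.
set A := Sg *m Emx S; set B := invmx _ *m _.
rewrite [X in _ + X]mxE.
have e : (A *m B) k j = (row k (A *m B)) 0 j by rewrite [RHS]mxE.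
rewrite e.
rewrite row_mul hrow -row_mul /B mulmxA mulmxV // mul1mx mxE colmxE mxE hk.
by rewrite subrr.
Qed.

End Lin.
Arguments Emx {R p}.
Arguments Gmx {R p}.
Arguments Mmx {R p}.
Arguments sum_delta_r {R p}.
Arguments rowmxE {R p m}.
Arguments colmxE {R p m}.
Arguments GmxE {R p}.
Arguments EmxwE {R p m}.
Arguments nz_entry {R m n}.
Arguments posdef_ge0 {R p}.
Arguments Gmx_unit {R p}.
Arguments quadE {R p}.
Arguments quad_delta {R m}.
Arguments Mmx_ge0 {R p}.
Arguments Mmx_diag {R p}.
Arguments Mmx_S0 {R p}.


Section Beta.
Context (R : realType) (p : nat) (A : {set 'I_p}) (b : #|A|.-tuple R).

Lemma beta_out k : k \notin A -> beta_of b k = 0.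
Proof.
move=> kA; rewrite /beta_of; case: pickP => // i /eqP hi.
by move: kA; rewrite -hi enum_valP.
Qed.

Lemma beta_in i : beta_of b (enum_val i) = tnth b i.
Proof.
rewrite /beta_of; case: pickP => [i' /eqP /enum_val_inj -> //|/(_ i)].
by rewrite eqxx.
Qed.

Lemma beta_sum (F : 'I_p -> R) :
  \sum_k beta_of b k * F k = \sum_(i < #|A|) F (enum_val i) * tnth b i.
Proof.
rewrite (bigID (fun k => k \in A)) /= [X in _ + X]big1 ?addr0; last first.
  by move=> k kA; rewrite beta_out // mul0r.
rewrite (big_enum_val (fun k => beta_of b k * F k)).
by apply: eq_bigr => i _; rewrite beta_in mulrC.
Qed.

End Beta.

Section Prob.
Context (R : realType) (d : measure_display) (T : measurableType d) (P : probability T R)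
  (p : nat) (X : 'I_p -> T -> R) (eps : T -> R)
  (hX2 : forall j, X j \in Lfun P 2%:E)
  (heps2 : eps \in Lfun P 2%:E)
  (sigma : R)
  (hvar : ('V_P[eps] = (sigma ^+ 2)%:E)%E)
  (huncorr : forall j, covariance P eps (X j) = 0%E)
  (delta : R).

Local Notation Sg := (covmx P X).

Lemma SgE k l : Sg k l = cov P (X k) (X l).
Proof. by rewrite mxE. Qed.

Lemma SgC k l : Sg k l = Sg l k.
Proof. by rewrite !SgE covC. Qed.

Lemma cov_epsX k : cov P eps (X k) = 0.
Proof. by rewrite /cov huncorr. Qed.

Lemma cov_epseps : cov P eps eps = sigma ^+ 2.
Proof. by rewrite /cov -/(variance P eps) hvar. Qed.

Section Y.
Context (beta : 'I_p -> R).
Definition Yf := fun t => delta + \sum_(j < p) beta j * X j t + eps t.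

Lemma sumL2 : (fun t => \sum_(j < p) beta j * X j t) \in Lfun P 2%:E.
Proof.
have [h _] := cov_suml (fun j t => beta j * X j t) eps
  (fun j => L2_scale (beta j) _ (hX2 j)) heps2.
exact: h.
Qed.

Lemma Y_L2 : Yf \in Lfun P 2%:E.
Proof.
apply: L2_add => //; apply: L2_add; first exact: L2_cst.
exact: sumL2.
Qed.

Lemma cov_lin Z : Z \in Lfun P 2%:E ->
  cov P Yf Z = \sum_k beta k * cov P (X k) Z + cov P eps Z.
Proof.
move=> hZ; rewrite /Yf.
rewrite (covDl (fun t => delta + \sum_(j < p) beta j * X j t) eps Z) //; last first.
  by apply: L2_add; [exact: L2_cst | exact: sumL2].
rewrite (covDl (fun _ => delta) (fun t => \sum_(j < p) beta j * X j t) Z) //; [|exact: L2_cst|exact: sumL2].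
rewrite cov_cstl add0r.
have [_ ->] := cov_suml (fun j t => beta j * X j t) Z
  (fun j => L2_scale (beta j) _ (hX2 j)) hZ.
by congr (_ + _); apply: eq_bigr => k _; rewrite covZl.
Qed.

Lemma covYX l : cov P Yf (X l) = \sum_k beta k * Sg k l.
Proof.
rewrite cov_lin // cov_epsX addr0.
by apply: eq_bigr => k _; rewrite SgE.
Qed.

Lemma covXY l : cov P (X l) Yf = \sum_k beta k * Sg l k.
Proof.
rewrite covC covYX; by apply: eq_bigr => k _; rewrite SgC.
Qed.

Lemma covYY : cov P Yf Yf = \sum_k beta k * (\sum_l beta l * Sg k l) + sigma ^+ 2.
Proof.
rewrite cov_lin; last exact: Y_L2.
congr (_ + _); first by apply: eq_bigr => k _; rewrite covXY.
rewrite covC cov_lin // cov_epseps big1 ?add0r // => k _.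
by rewrite covC cov_epsX mulr0.
Qed.

End Y.

Lemma mxsubE m n (A B : 'M[R]_(m, n)) i j : (A - B) i j = A i j - B i j.
Proof. by rewrite !mxE. Qed.

Lemma pcovE Z1 Z2 (S : {set 'I_p}) (u v : 'cV_p) :
  (forall k, cov P Z1 (X k) = (u^T *m Sg) 0 k) ->
  (forall k, cov P (X k) Z2 = (Sg *m v) k 0) ->
  pcov P Z1 Z2 (Xsub X S) =
    cov P Z1 Z2 - (u^T *m Sg *m v) 0 0 + (u^T *m Mmx Sg S *m v) 0 0.
Proof.
move=> h1 h2; rewrite /pcov.
have eG : covmx P (Xsub X S) = Gmx Sg S.
  by rewrite GmxE; apply/matrixP => i j; rewrite !mxE.
have er : \row_i cov P Z1 (Xsub X S i) = (u^T *m Sg) *m Emx S.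
  rewrite rowmxE; apply/matrixP => i j; rewrite [LHS]mxE [RHS]mxE (ord1 i).
  exact: h1.
have ec : \col_i cov P (Xsub X S i) Z2 = (Emx S)^T *m (Sg *m v).
  rewrite colmxE; apply/matrixP => i j; rewrite [LHS]mxE [RHS]mxE (ord1 j).
  exact: h2.
rewrite eG er ec /Mmx mulmxBr mulmxBl mxsubE !mulmxA.
by rewrite addrA subrK.
Qed.

Lemma colSg (v : 'cV[R]_p) k : (Sg *m v) k 0 = \sum_l Sg k l * v l 0.
Proof. by rewrite mxE. Qed.

Lemma rowvE (beta : 'I_p -> R) (M : 'M[R]_p) k :
  ((\col_l beta l)^T *m M) 0 k = \sum_l beta l * M l k.
Proof. by rewrite mxE; apply: eq_bigr => l _; rewrite !mxE. Qed.

Lemma pcovYX (beta : 'I_p -> R) (S : {set 'I_p}) j :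
  pcov P (Yf beta) (X j) (Xsub X S) = \sum_k beta k * Mmx Sg S k j.
Proof.
rewrite (pcovE _ _ S (\col_l beta l) (delta_mx j 0)); first last.
- by move=> k; rewrite -colE mxE SgE.
- by move=> k; rewrite rowvE covYX.
rewrite -colE mxE rowvE covYX subrr add0r.
by rewrite -colE mxE rowvE.
Qed.

Lemma pcovXX (S : {set 'I_p}) j :
  pcov P (X j) (X j) (Xsub X S) = Mmx Sg S j j.
Proof.
rewrite (pcovE _ _ S (delta_mx j 0) (delta_mx j 0)); first last.
- by move=> k; rewrite -colE mxE SgE.
- by move=> k; rewrite trmx_delta -rowE mxE SgE.
by rewrite !quad_delta SgE subrr add0r.
Qed.

Lemma pcovYY (beta : 'I_p -> R) (S : {set 'I_p}) :
  pcov P (Yf beta) (Yf beta) (Xsub X S) =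
  (((\col_l beta l)^T *m Mmx Sg S *m (\col_l beta l)) 0 0) + sigma ^+ 2.
Proof.
rewrite (pcovE _ _ S (\col_l beta l) (\col_l beta l)); first last.
- move=> k; rewrite colSg covXY; apply: eq_bigr => l _.
  by rewrite mxE mulrC.
- by move=> k; rewrite rowvE covYX.
rewrite covYY -mulmxA mxE.
have -> : \sum_j (\col_l beta l)^T 0 j * (Sg *m \col_l beta l) j 0 =
   \sum_k beta k * (\sum_l beta l * Sg k l).
  apply: eq_bigr => k _; rewrite colSg !mxE; congr (_ * _).
  by apply: eq_bigr => l _; rewrite mxE mulrC.
by ring.
Qed.

End Prob.

Theorem theorem1 (R : realType)
  (d : measure_display) (T : measurableType d) (P : probability T R)
  (p : nat) (X : 'I_p -> T -> R) (eps : T -> R)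
  (hX2 : forall j, X j \in Lfun P 2%:E)
  (heps2 : eps \in Lfun P 2%:E)
  (heps0 : ('E_P[eps] = 0)%E)
  (sigma : R) (hsigma : 0 < sigma)
  (hvar : ('V_P[eps] = (sigma ^+ 2)%:E)%E)
  (huncorr : forall j, covariance P eps (X j) = 0%E)
  (delta : R)
  (hC1 : posdef (covmx P X))
  (A : {set 'I_p})
  (d' : measure_display) (Omega : measurableType d') (Q : probability Omega R)
  (B : Omega -> #|A|.-tuple R) (hB : measurable_fun setT B)
  (f : #|A|.-tuple R -> R) (hf0 : forall b, 0 <= f b) (hfm : measurable_fun setT f)
  (hdens : forall E : set (#|A|.-tuple R), measurable E ->
      Q (B @^-1` E) = lebesgue_iint (fun b => (\1_E b * f b)%:E)) :
  {ae Q, forall w : Omega,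
     partially_faithful P X
       (fun t => delta + \sum_(j < p) beta_of (B w) j * X j t + eps t)}.
Proof.
set Sg := covmx P X.
pose c (j : 'I_p) (S : {set 'I_p}) (i : 'I_#|A|) := Mmx Sg S (enum_val i) j.
have H : {ae Q, forall w, forall j : 'I_p, forall S : {set 'I_p},
    j \in A -> j \notin S -> \sum_i c j S i * tnth (B w) i != 0}.
  apply: filter_forall => j; apply: filter_forall => S.
  case: (boolP (j \in A)) => jA; last by apply: nearW => w.
  case: (boolP (j \in S)) => jS; first by apply: nearW => w.
  set i0 := enum_rank_in jA j.
  have ci0 : c j S i0 != 0.
    by rewrite /c enum_rankK_in // gt_eqF // Mmx_diag.
  have hn := hyper_negl _ _ _ Q _ B hB f hf0 hdens (c j S) i0 ci0.
  apply: negligibleS hn => w /= hw.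
  apply/eqP; apply/negPn/negP => h; apply: hw => _ _; exact: h.
move: H; apply: filterS => w hw j.
set b := B w.
change (fun t => delta + \sum_(j0 < p) beta_of b j0 * X j0 t + eps t)
  with (Yf _ _ _ _ X eps delta (beta_of b)).
case: (boolP (j \in A)) => jA; last first.
  move=> _; rewrite /pcorr (pcovYX _ _ _ P _ _ _ hX2 heps2 huncorr).
  rewrite big1 ?mul0r // => k _.
  have [->|kj] := eqVneq k j; first by rewrite beta_out // mul0r.
  by rewrite Mmx_S0 ?mulr0 // !inE kj.
move=> [S [hS hpc]]; exfalso.
have jS : j \notin S.
  by apply/negP => jS; have := fintype.subsetP hS j jS; rewrite !inE eqxx.
move: hpc; apply/eqP.
rewrite /pcorr mulf_neq0 //.
  rewrite (pcovYX _ _ _ P _ _ _ hX2 heps2 huncorr) beta_sum.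
  exact: (hw j S jA jS).
rewrite invr_neq0 // gt_eqF // sqrtr_gt0 mulr_gt0 //.
  rewrite (pcovYY _ _ _ P _ _ _ hX2 heps2 _ hvar huncorr).
  by apply: ltr_wpDl; [exact: Mmx_ge0 | exact: exprn_gt0].
by rewrite pcovXX Mmx_diag.
Qed.
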